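(* Let $p$ be a prime, $\alpha_1,\dots,\alpha_n,\beta\ge1$, and let $f:\mathbb{Z}_{p^{\alpha_1}}\times\cdots\times\mathbb{Z}_{p^{\alpha_n}}\to\mathbb{Z}_{p^\beta}$ be any map. Put $d_j:=p^{\alpha_j}-1+(\beta-1)(p-1)p^{\alpha_j-1}$ and $[d]:=\{0,\dots,d_1\}\times\cdots\times\{0,\dots,d_n\}$. Then the polyfract $$P=\sum_{\delta\in[d]}P_\delta\prod_{j=1}^n\binom{X_j}{\delta_j},\qquad P_\delta:=\sum_{x\in\mathbb{Z}_{p^{\alpha_1}}\times\cdots\times\mathbb{Z}_{p^{\alpha_n}}}\binom{\delta_1}{\delta_1-x_1}_{p^{\alpha_1},p^\beta}\cdots\binom{\delta_n}{\delta_n-x_n}_{p^{\alpha_n},p^\beta}f(x),$$ is $(p^{\alpha_1},\dots,p^{\alpha_n})$-periodic and interpolates $f$: $P(x)=f(x)$ for all $x\in\mathbb{Z}_{p^{\alpha_1}}\times\cdots\times\mathbb{Z}_{p^{\alpha_n}}$.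
   Context: $\mathbb{Z}_r=\mathbb{Z}/r\mathbb{Z}$; $\binom{X}{\delta}=X(X-1)\cdots(X-\delta+1)/\delta!$, $\binom{X}{0}=1$. For integers $d\ge0$, $q\ge1$, $r\ge0$ and a residue class $x\in\mathbb{Z}_q$, the co-monofract value is $\binom{d}{x}_{q}:=\sum_{\hat x\in x,\ \hat x\ge0}(-1)^{\hat x}\binom{d}{\hat x}\in\mathbb{Z}$ (only $\hat x\le d$ contribute) and $\binom{d}{x}_{q,r}:=\binom{d}{x}_q+r\mathbb{Z}\in\mathbb{Z}_r$; here $\delta_j-x_j$ denotes the residue class $\delta_j+\mathbb{Z}_{p^{\alpha_j}}$-difference in $\mathbb{Z}_{p^{\alpha_j}}$. A polyfract $P$ is evaluated at $x\in\mathbb{Z}^n$ by $P(x)=\sum_\delta(\prod_j\binom{x_j}{\delta_j})P_\delta\in\mathbb{Z}_{p^\beta}$; being periodic, it induces a map on $\mathbb{Z}_{p^{\alpha_1}}\times\cdots\times\mathbb{Z}_{p^{\alpha_n}}$. *)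

(* Defs.v *)
From HB Require Import structures.
From mathcomp Require Import all_boot all_order all_algebra.
Set Implicit Arguments. Unset Strict Implicit. Unset Printing Implicit Defensive.
Import Order.TTheory GRing.Theory Num.Theory.
Local Open Scope ring_scope.

(* Integer binomial X(X-1)...(X-k+1)/k!  (exact division in int). *)
Definition binz (X : int) (k : nat) : int :=
  ((\prod_(i < k) (X - i%:Z)) %/ (k`!)%:Z)%Z.

(* co-monofract value  binom(d, c)_q := sum over hat x >= 0, hat x in c + qZ,
   of (-1)^(hat x) 'C(d, hat x); only hat x <= d contribute. *)
Definition comono (d q : nat) (c : int) : int :=
  \sum_(0 <= k < d.+1 | (k%:Z == c %[mod q%:Z])%Z) (-1) ^+ k * ('C(d, k))%:Z.

Definition dexp (p beta a : nat) : nat :=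
  (p ^ a - 1 + (beta - 1) * (p - 1) * p ^ (a - 1))%N.

(* The domain Z_{p^alpha_1} x ... x Z_{p^alpha_n}, elements given by their
   canonical representatives in {0, ..., p^alpha_j - 1}. *)
Definition dom (p n : nat) (alpha : 'I_n -> nat) :=
  {dffun forall j : 'I_n, 'I_(p ^ alpha j)}.

Definition idx (p beta n : nat) (alpha : 'I_n -> nat) :=
  {dffun forall j : 'I_n, 'I_(dexp p beta (alpha j)).+1}.

Definition coefP (p beta n : nat) (alpha : 'I_n -> nat)
    (f : dom p alpha -> 'Z_(p ^ beta)) (delta : 'I_n -> nat) : 'Z_(p ^ beta) :=
  \sum_(x : dom p alpha)
     (\prod_(j < n) (comono (delta j) (p ^ alpha j) ((delta j)%:Z - (x j : nat)%:Z))%:~R)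
       * f x.

Definition evalP (p beta n : nat) (alpha : 'I_n -> nat)
    (f : dom p alpha -> 'Z_(p ^ beta)) (y : 'I_n -> int) : 'Z_(p ^ beta) :=
  \sum_(delta : idx p beta alpha)
     (\prod_(j < n) binz (y j) (delta j))%:~R * coefP f (fun j => (delta j : nat)).

(* Main.v *)
Require Import Defs.
From HB Require Import structures.
From mathcomp Require Import all_boot all_order all_algebra ring zify.
Set Implicit Arguments. Unset Strict Implicit. Unset Printing Implicit Defensive.
Import Order.TTheory GRing.Theory Num.Theory.
Local Open Scope ring_scope.

Definition Qz (y : int) (k : nat) : int := \prod_(i < k) (y - i%:Z).

Lemma QzS y k : Qz (y + 1) k.+1 = Qz y k.+1 + k.+1%:Z * Qz y k.
Proof.
rewrite /Qz big_ord_recl big_ord_recr /=.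
have -> : \prod_(i < k) (y + 1 - (bump 0 i)%:Z) = \prod_(i < k) (y - i%:Z).
  by apply: eq_bigr => i _; rewrite /bump /= add1n -addn1 PoszD; ring.
rewrite -[k.+1]addn1 PoszD; ring.
Qed.

Lemma Qz0 k : Qz 0 k.+1 = 0.
Proof. by rewrite /Qz big_ord_recl /= subrr mul0r. Qed.

Lemma Qz_dvd k y : ((k`!)%:Z %| Qz y k)%Z.
Proof.
elim: k y => [|k IH] y; first by rewrite /Qz big_ord0 dvdz1 // fact0.
have step : forall z, ((k.+1`!)%:Z %| Qz (z + 1) k.+1)%Z = ((k.+1`!)%:Z %| Qz z k.+1)%Z.
  move=> z; rewrite QzS rpredDr //.
  rewrite factS PoszM; apply: dvdz_mul => //; exact: IH.
elim/int_rec: y => [|m IHm|m IHm]; first by rewrite Qz0 dvdz0.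
  by rewrite -addn1 PoszD step.
by rewrite -step -addn1 PoszD opprD addrNK.
Qed.

Lemma binzE y k : binz y k = (Qz y k %/ (k`!)%:Z)%Z.
Proof. by []. Qed.

Lemma binz0 y : binz y 0 = 1.
Proof. by rewrite /binz big_ord0 fact0 divz1. Qed.

Lemma binz0n k : binz 0 k = (k == 0)%:R.
Proof.
case: k => [|k]; first by rewrite binz0.
by have := Qz0 k; rewrite /Qz /binz => ->; rewrite div0z.
Qed.

Lemma binzS y k : binz (y + 1) k.+1 = binz y k.+1 + binz y k.
Proof.
rewrite !binzE QzS.
have /dvdzP [a Ha] := Qz_dvd k y.
have /dvdzP [b Hb] := Qz_dvd k.+1 y.
have nz : forall m, (m`!)%:Z != 0 by move=> m; rewrite eqz_nat -lt0n fact_gt0.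
rewrite Ha Hb factS PoszM.
have -> : b * (k.+1%:Z * (k`!)%:Z) + k.+1%:Z * (a * (k`!)%:Z) = (b + a) * (k.+1%:Z * (k`!)%:Z) by ring.
by rewrite !mulzK // mulf_neq0.
Qed.

Section Fsec.
Variables (R : pzRingType) (d : nat) (A : nat -> int -> R).
Hypothesis AS : forall e r, A e.+1 (r + 1) = A e (r + 1) - A e r.
Hypothesis Ad : forall r, A d.+1 r = 0.

Definition Ff (s y : int) : R := \sum_(e < d.+1) (binz y e)%:~R * A e (e%:Z + s).

Lemma Fshift s y : Ff (s + 1) y = Ff s (y + 1).
Proof.
have E1 : Ff (s + 1) y = Ff s y + \sum_(e < d.+1) (binz y e)%:~R * A e.+1 (e.+1%:Z + s).
  rewrite /Ff -big_split /=; apply: eq_bigr => e _.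
  have -> : e.+1%:Z + s = (e%:Z + s) + 1 by rewrite -addn1 PoszD; ring.
  by rewrite AS mulrBr addrC subrK addrA.
rewrite E1 /Ff big_ord_recl [in RHS]big_ord_recl /= binz0 !add0r.
under [in RHS]eq_bigr => i _ do rewrite /bump /= add1n binzS rmorphD mulrDl.
rewrite big_split /= addrA; congr (_ + _).
  rewrite binz0; congr (_ + _); apply: eq_bigr => i _; by rewrite /bump /= add1n.
by rewrite big_ord_recr /= Ad mulr0 addr0.
Qed.

Lemma F0 s : Ff s 0 = A 0 s.
Proof.
rewrite /Ff big_ord_recl /= binz0n /= add0r mul1r big1 ?addr0 // => i _.
by rewrite binz0n /= mul0r.
Qed.

Lemma Fall y s : Ff s y = A 0 (s + y).
Proof.
elim/int_rec: y s => [|m IHm|m IHm] s; first by rewrite F0 addr0.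
  by rewrite -addn1 PoszD -Fshift IHm; congr (A 0 _); ring.
have -> : s = (s - 1) + 1 by ring.
rewrite Fshift.
have -> : - (m.+1)%:Z + 1 = - m%:Z by rewrite -addn1 PoszD; ring.
by rewrite IHm; congr (A 0 _); rewrite -addn1 PoszD; ring.
Qed.
End Fsec.
Section Gen.
Variables (R : comPzRingType) (p : nat).
Hypothesis pr : prime p.
Local Notation P := (p%:R : R).

Lemma frob (a b : R) : exists w, (a + b)^+p = a^+p + b^+p + P * w.
Proof.
have [m pm] : exists m, p = m.+2 by case: (p) pr => [|[|m]] //; exists m.
exists (\sum_(i < m.+1) (a ^+ (m.+2 - i.+1) * b ^+ i.+1) *+ ('C(m.+2, i.+1) %/ m.+2)).
rewrite pm exprDn big_ord_recr big_ord_recl /= subnn subn0 !bin0 binn !expr0 mulr1 mul1r.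
rewrite big_distrr /=.
have -> : \sum_(i < m.+1) (a ^+ (m.+2 - bump 0 i) * b ^+ bump 0 i) *+ 'C(m.+2, bump 0 i)
  = \sum_(i < m.+1) m.+2%:R * ((a ^+ (m.+2 - i.+1) * b ^+ i.+1) *+ ('C(m.+2, i.+1) %/ m.+2)).
  apply: eq_bigr => i _; rewrite /bump /= add1n mulr_natl -mulrnA divnK //.
  by rewrite -pm prime_dvd_bin // pm /= ltnS ltn_ord.
rewrite !mulr1n; ring.
Qed.

Lemma frob1 (y : R) : exists w, (1 - y)^+p = 1 - y^+p + P * w.
Proof.
have [w Hw] := frob (1 - y) y; rewrite subrK expr1n in Hw.
by exists (-w); rewrite -[LHS](addrK (y ^+ p + P * w)) addrA -Hw; ring.
Qed.

Lemma frobe e (y : R) : exists w, (1 - y)^+(p ^ e) = 1 - y^+(p ^ e) + P * w.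
Proof.
elim: e => [|e [w Hw]]; first by exists 0; rewrite expn0 !expr1; ring.
have [w1 E1] := frob (1 - y ^+ (p ^ e)) (P * w).
have [w2 E2] := frob1 (y ^+ (p ^ e)).
have Pp : P ^+ p = P * P ^+ p.-1 by rewrite -exprS prednK // prime_gt0.
exists (w2 + P ^+ p.-1 * w ^+ p + w1).
rewrite expnSr !exprM Hw E1 E2 exprMn Pp; ring.
Qed.

Lemma binpow n (a b : R) : exists c, (a + P * b)^+n = a^+n + P * c.
Proof.
elim: n => [|n [c Hc]]; first by exists 0; rewrite !expr0; ring.
by exists (b * (a^+n + P * c) + a * c); rewrite !exprS Hc; ring.
Qed.

Lemma cong k i : p = k.+1 -> (i < p)%N -> (p%:Z %| (-1)^+i * ('C(k, i))%:Z - 1)%Z.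
Proof.
move=> pk; elim: i => [|i IH] lt; first by rewrite bin0 expr0 mul1r subrr dvdz0.
have E : (-1)^+i.+1 * ('C(k, i.+1))%:Z - 1
   = (-1)^+i.+1 * ('C(k.+1, i.+1))%:Z + ((-1)^+i * ('C(k, i))%:Z - 1).
  by rewrite binS PoszD exprS; ring.
rewrite E rpredD ?IH ?(ltnW lt) // dvdz_mull // dvdzE /= -pk prime_dvd_bin //.
Qed.

Lemma phi_lem k (Y : R) : p = k.+1 -> exists K, (1 - Y)^+k = \sum_(i < p) Y^+i + P * K.
Proof.
move=> pk.
exists (\sum_(i < k.+1) ((((-1)^+i * ('C(k,i))%:Z - 1) %/ p%:Z)%Z)%:~R * Y^+i).
have -> : \sum_(i < p) Y^+i = \sum_(i < k.+1) Y^+i by rewrite pk.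
rewrite addrC exprD1n big_distrr -big_split /=.
apply: eq_bigr => i _.
have lt : (i < p)%N by rewrite pk ltn_ord.
have /divzK e := cong pk lt.
set m := ((_ - 1) %/ _)%Z in e *.
have e2 : ((-1)^+i * ('C(k,i))%:R : R) = 1 + P * m%:~R.
  have := congr1 (fun z : int => (z%:~R : R)) e.
  rewrite /= !(intrM, intrD, intrN, intr_sign) => h.
  have h2 : ((-1) ^+ i * ('C(k, i))%:R : R) = m%:~R * p%:R + 1.
    by rewrite -[(p%:R : R)]/(p%:~R) h subrK.
  by rewrite h2; ring.
rewrite exprNn -mulr_natr.
transitivity (((-1)^+i * ('C(k,i))%:R) * Y^+i); first by ring.
by rewrite e2; ring.
Qed.

Variables (e : nat) (x : R).
Local Notation Y := (x ^+ (p ^ e)).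
Local Notation v := (1 - Y).
Local Notation Phi := (\sum_(i < p) Y ^+ i).
Local Notation u := (1 - x).
Local Notation q := (p ^ e.+1)%N.
Local Notation phi := (p.-1 * p ^ e)%N.

Definition memk (k : nat) (a : R) := exists b c, a = P ^+ k * b + v * Phi * c.

Lemma E1 : exists H, u ^+ (p ^ e) = v + P * H.
Proof. exact: frobe. Qed.

Lemma E2 : exists G, u ^+ phi = Phi + P * G.
Proof.
have [H EH] := E1.
have pk : p = p.-1.+1 by rewrite prednK // prime_gt0.
have [K EK] := phi_lem Y pk.
have [c Ec] := binpow p.-1 v H.
exists (K + c); rewrite mulnC exprM EH Ec EK; ring.
Qed.

Lemma E4 : exists M, Phi * Phi = P * Phi + v * Phi * M.
Proof.
exists (- \sum_(i < p) \sum_(j < i) Y ^+ j).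
rewrite big_distrr /=.
rewrite (eq_bigr (fun i : 'I_p => Phi + v * Phi * - (\sum_(j < i) Y ^+ j))); last first.
  move=> i _; have h := subrX1 Y i.
  transitivity (Phi + Phi * (Y ^+ i - 1)); first by ring.
  by rewrite h; ring.
rewrite big_split /= sumr_const card_ord -mulr_natl -big_distrr /=.
by rewrite sumrN mulr1 mulr_natl.
Qed.

Lemma qE : q = (p ^ e + phi)%N.
Proof. by rewrite expnS -{1}(prednK (prime_gt0 pr)) mulSn. Qed.

Lemma memU m : memk m.+1 (u ^+ (q + m * phi)) /\ memk m.+2 (u ^+ (q + m * phi) * Phi).
Proof.
have [H EH] := E1. have [G EG] := E2. have [M EM] := E4.
elim: m => [|m [[b1 [c1 Ha]] [b2 [c2 Hb]]]].
  rewrite mul0n addn0 qE exprD EH EG; split.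
    by exists (H * Phi + v * G + P * H * G), 1; ring.
  exists (H * Phi + H * G * Phi), (P + v * M + P * G + P * H * M).
  transitivity ((v + P * H) * (Phi * Phi + P * G * Phi)); first by ring.
  rewrite EM; ring.
set a := u ^+ (q + m * phi) in Ha Hb *.
have ea : u ^+ (q + m.+1 * phi) = a * (Phi + P * G) by rewrite mulSn addnCA exprD EG mulrC.
rewrite ea; split.
  exists (b2 + G * b1), (c2 + P * G * c1).
  transitivity (a * Phi + P * G * a); first by ring.
  rewrite Hb Ha !exprS; ring.
exists ((1 + G) * b2), (P * (1 + G) * c2 + M * a).
transitivity (a * (Phi * Phi + P * G * Phi)); first by ring.
rewrite EM.
transitivity (P * (1 + G) * (a * Phi) + v * Phi * (M * a)); first by ring.
rewrite Hb !exprS; ring.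
Qed.

Lemma memD m d : (q + m * phi <= d)%N -> memk m.+1 (u ^+ d).
Proof.
move=> le; have [[b [c E]] _] := memU m.
exists (b * u ^+ (d - (q + m * phi))), (c * u ^+ (d - (q + m * phi))).
by rewrite -{1}(subnKC le) exprD E; ring.
Qed.
End Gen.
Section Fold.
Variable q : nat.
Definition foldN (N : nat) (P : {poly int}) (r : int) : int :=
  \sum_(0 <= i < N | (i%:Z == r %[mod q%:Z])%Z) P`_i.

Lemma foldN_ext N M (P : {poly int}) (r : int) : (size P <= N)%N -> (N <= M)%N -> foldN N P r = foldN M P r.
Proof.
move=> sP NM; rewrite /foldN (big_cat_nat (leq0n N) NM) /=.
rewrite [X in _ + X]big_nat_cond [X in _ + X]big1 ?addr0 // => i /andP [/andP [Hi _] _].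
by rewrite nth_default // (leq_trans sP Hi).
Qed.

Lemma foldND N (P Q : {poly int}) (r : int) : foldN N (P + Q) r = foldN N P r + foldN N Q r.
Proof. by rewrite /foldN -big_split; apply: eq_bigr => i _; rewrite coefD. Qed.

Lemma foldNN N (P : {poly int}) (r : int) : foldN N (- P) r = - foldN N P r.
Proof. by rewrite /foldN -sumrN; apply: eq_bigr => i _; rewrite coefN. Qed.

Lemma foldNMn N (P : {poly int}) n (r : int) : foldN N (P *+ n) r = foldN N P r *+ n.
Proof. by rewrite /foldN -sumrMnl; apply: eq_bigr => i _; rewrite coefMn. Qed.

Lemma foldN_shift N n (c : {poly int}) (r : int) : (n <= N)%N -> foldN N ('X^n * c) (r + n%:Z) = foldN (N - n) c r.
Proof.
move=> nN; rewrite /foldN (big_cat_nat (leq0n n) nN) /=.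
rewrite [X in X + _]big_nat_cond [X in X + _]big1 ?add0r; last first.
  by move=> i /andP [/andP [_ Hi] _]; rewrite coefXnM Hi.
rewrite -{1}(add0n n) big_addn; apply: eq_big => [i|i _].
  by rewrite PoszD eqz_modDr.
by rewrite coefXnM ltnNge leq_addl /= addnK.
Qed.

Lemma foldN_per N (P : {poly int}) (r : int) : foldN N P (r + q%:Z) = foldN N P r.
Proof. by rewrite /foldN; apply: eq_bigl => i; rewrite modzDr. Qed.
End Fold.

Lemma coef_1X (d k : nat) : ((1 - 'X : {poly int}) ^+ d)`_k = (-1) ^+ k * ('C(d, k))%:Z.
Proof.
elim: d k => [|d IH] k.
  by rewrite expr0 coef1; case: k => [|k] //=; rewrite bin0n /= mulr0.
rewrite exprSr mulrBr mulr1 coefB coefMX.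
case: k => [|k] /=; first by rewrite IH subr0 !bin0 expr0.
rewrite !IH binS PoszD exprS; ring.
Qed.

Lemma size_1X (d : nat) : size ((1 - 'X : {poly int}) ^+ d) = d.+1.
Proof.
have -> : (1 - 'X : {poly int}) = (-1) * ('X - 1%:P) by rewrite polyC1; ring.
by rewrite exprMn size_Msign size_exp_XsubC.
Qed.

Lemma comonoE d q (r : int) : comono d q r = foldN q d.+1 ((1 - 'X) ^+ d) r.
Proof. by rewrite /comono /foldN; apply: eq_bigr => k _; rewrite coef_1X. Qed.

Lemma comonoS d q (r : int) : comono d.+1 q (r + 1) = comono d q (r + 1) - comono d q r.
Proof.
rewrite !comonoE exprS mulrBl mul1r foldND foldNN.
rewrite -(@foldN_ext q d.+1 d.+2 ((1-'X)^+d) (r+1)) ?size_1X //.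
by rewrite (@foldN_shift q d.+2 1 _ r).
Qed.

Lemma comono_per d q (r : int) : comono d q (r + q%:Z) = comono d q r.
Proof. by rewrite !comonoE foldN_per. Qed.

Lemma comono0 q (c : int) : comono 0 q c = if (0%:Z == c %[mod q%:Z])%Z then 1 else 0.
Proof. by rewrite /comono big_mkcond big_nat1 /= expr0 mul1r bin0. Qed.

Lemma extract (q k d : nat) (b c : {poly int}) (r : int) :
  (1 - 'X) ^+ d = (k%:R) * b + (1 - 'X^q) * c -> (k%:Z %| comono d q r)%Z.
Proof.
move=> E.
set N := (d.+1 + size b + (size c + q))%N.
have -> : comono d q r = foldN q N ((1 - 'X) ^+ d) r.
  by rewrite comonoE (@foldN_ext q d.+1 N) ?size_1X // /N -addnA leq_addr.
rewrite E foldND mulr_natl foldNMn mulrBl mul1r foldND foldNN.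
have qN : (q <= N)%N by rewrite /N addnA leq_addl.
rewrite -[r](subrK q%:Z) foldN_shift // !foldN_per.
rewrite -(@foldN_ext q (N - q)%N N c) ?leq_subr //; last first.
  by rewrite /N addnA addnK leq_addl.
by rewrite subrr addr0 -mulr_natr natz dvdz_mull.
Qed.

Lemma Zp0 (m : nat) (z : int) : (1 < m)%N -> (m%:Z %| z)%Z -> (z%:~R : 'Z_m) = 0.
Proof.
move=> m1 /dvdzP [w ->]; rewrite intrM.
have -> : ((m%:Z)%:~R : 'Z_m) = m%:R by [].
by rewrite pchar_Zp // mulr0.
Qed.

Lemma pbeta_gt1 p beta : prime p -> (1 <= beta)%N -> (1 < p ^ beta)%N.
Proof.
move=> pr hb; apply: (leq_trans (prime_gt1 pr)).
by rewrite -{1}(expn1 p) leq_pexp2l // prime_gt0.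
Qed.

Lemma vanish (p beta a : nat) (r : int) : prime p -> (1 <= a)%N -> (1 <= beta)%N ->
  ((comono (dexp p beta a).+1 (p ^ a) r)%:~R : 'Z_(p ^ beta)) = 0.
Proof.
move=> pr ha hb.
have [e ae] : exists e, a = e.+1 by case: (a) ha => // e _; exists e.
apply: Zp0; first exact: pbeta_gt1.
have le : (p ^ e.+1 + beta.-1 * (p.-1 * p ^ e) <= (dexp p beta a).+1)%N.
  have h : (0 < p ^ e.+1)%N by rewrite expn_gt0 prime_gt0.
  rewrite /dexp ae !subn1 /= mulnA; lia.
have [b [c E]] := @memD _ p pr e ('X : {poly int}) _ _ le.
rewrite prednK // -natrX in E.
have ev : (1 - 'X ^+ (p ^ e)) * \sum_(i < p) ('X ^+ (p ^ e)) ^+ i = 1 - ('X : {poly int}) ^+ (p ^ e.+1).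
  have := subrX1 ('X ^+ (p ^ e) : {poly int}) p; rewrite -exprM -expnSr => h.
  transitivity (- (('X ^+ (p ^ e) - 1) * \sum_(i < p) ('X ^+ (p ^ e)) ^+ i) : {poly int}); first by ring.
  by rewrite -h; ring.
rewrite ev in E; rewrite -ae in E; exact: extract E.
Qed.

Lemma oneD (p beta a : nat) (y x : int) : prime p -> (1 <= a)%N -> (1 <= beta)%N ->
  \sum_(t < (dexp p beta a).+1)
     (binz y t)%:~R * ((comono t (p ^ a) (t%:Z - x))%:~R : 'Z_(p ^ beta))
  = (comono 0 (p ^ a) (y - x))%:~R.
Proof.
move=> pr ha hb.
have AS : forall t r, ((comono t.+1 (p ^ a) (r + 1))%:~R : 'Z_(p ^ beta))
   = (comono t (p ^ a) (r + 1))%:~R - (comono t (p ^ a) r)%:~R.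
  by move=> t r; rewrite comonoS intrD intrN.
have := Fall AS (fun r => vanish r pr ha hb) y (- x).
by rewrite /Ff addrC.
Qed.
Lemma bigA_dffun (R : comRingType) (I : finType) (T_ : I -> finType)
   (F : forall i, {ffun T_ i -> R}) :
  \sum_(f : {dffun forall i, T_ i}) \prod_i F i (f i) = \prod_i \sum_(t : T_ i) F i t.
Proof.
rewrite (reindex (@dffun_of_fprod I T_)) /=; last exact/onW_bij/dffun_of_fprod_bij.
under eq_bigr do under eq_bigr do rewrite ffunE.
rewrite (big_fprod _ _ F).
under [RHS]eq_bigr do rewrite (big_tag (fun i t => F i t)).
by rewrite bigA_distr_big_dep.
Qed.

Lemma modneq (q a b : nat) : (a < q)%N -> (b < q)%N -> a != b ->
  ~~ (0%:Z == a%:Z - b%:Z %[mod q%:Z])%Z.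
Proof.
move=> aq bq ab; rewrite eqz_mod_dvd; apply/negP => /dvdzP [w H].
move/eqP: ab => ab.
have : (w = 0 \/ 1 <= w \/ w <= -1)%R by lia.
case=> [w0|[w0|w0]]; first by rewrite w0 mul0r in H; lia.
  have : (q%:Z <= w * q%:Z)%R by rewrite -[X in (X <= _)%R]mul1r ler_wpM2r.
  lia.
have : (w * q%:Z <= - q%:Z)%R by rewrite -mulN1r ler_wpM2r.
lia.
Qed.

Lemma stepA (p n beta : nat) (alpha : 'I_n -> nat) (f : dom p alpha -> 'Z_(p ^ beta))
  (y : 'I_n -> int) : prime p -> (forall j, (1 <= alpha j)%N) -> (1 <= beta)%N ->
  evalP f y = \sum_(x : dom p alpha)
     (\prod_(j < n) ((comono 0 (p ^ alpha j) (y j - (x j : nat)%:Z))%:~R : 'Z_(p ^ beta))) * f x.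
Proof.
move=> pr ha hb; rewrite /evalP /coefP.
under eq_bigr do rewrite big_distrr.
rewrite exchange_big /=; apply: eq_bigr => x _.
under eq_bigr do rewrite mulrA.
rewrite -big_distrl /=; congr (_ * _).
pose F := fun j : 'I_n => [ffun t : 'I_(dexp p beta (alpha j)).+1 =>
   ((binz (y j) t)%:~R * (comono t (p ^ alpha j) (t%:Z - (x j : nat)%:Z))%:~R : 'Z_(p ^ beta))].
transitivity (\sum_(d : idx p beta alpha) \prod_(j < n) F j (d j)).
  apply: eq_bigr => d _; rewrite !rmorph_prod -big_split /=.
  by apply: eq_bigr => j _; rewrite ffunE.
rewrite bigA_dffun; apply: eq_bigr => j _.
under eq_bigr do rewrite ffunE.
exact: oneD.
Qed.

Theorem theorem3p8 (p n beta : nat) (alpha : 'I_n -> nat)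
    (f : dom p alpha -> 'Z_(p ^ beta)) :
  prime p -> (forall j, (1 <= alpha j)%N) -> (1 <= beta)%N ->
  (forall (y : 'I_n -> int) (k : 'I_n),
      evalP f (fun j => if j == k then y j + (p ^ alpha k)%:Z else y j) = evalP f y)
  /\ (forall x : dom p alpha, evalP f (fun j => (x j : nat)%:Z) = f x).
Proof.
move=> pr ha hb; split.
  move=> y k; rewrite !stepA //; apply: eq_bigr => x _; congr (_ * _).
  apply: eq_bigr => j _; case: eqP => [->|] //.
  by rewrite addrAC comono_per.
move=> x'; rewrite stepA // (bigD1 x') //= [X in _ + X]big1 ?addr0.
  rewrite big1 ?mul1r // => j _.
  by rewrite subrr comono0 /= eqxx.
move=> x neq.
have [j hj] : exists j, x' j != x j.
  apply/existsP; rewrite -negb_forall; apply: contra neq => /forallP h.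
  by apply/eqP/ffunP => i; apply/esym/eqP/h.
rewrite (bigD1 j) //= comono0.
by rewrite (negbTE (modneq (ltn_ord _) (ltn_ord _) hj)) /= mul0r mul0r.
Qed.
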